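(* Fix $N\ge1$, $L>0$, $\alpha>0$, $\lambda_e>0$, $\epsilon\in(0,1)$, and let $$K_5=\frac{2N}{\alpha}\left[\left(\frac{L}{N}\right)^\alpha+1\right]W_0\!\left(\frac{\alpha}{2}\left[\frac{\ln\frac{1}{1-\epsilon}}{NK_1}\right]^{-\alpha/2}\right),\qquad K_1=\pi\lambda_e\Gamma\!\left(\tfrac{2}{\alpha}+1\right).$$ Consider, as functions of $p>0$, the optimal non-on-off-transmission rates $R_t^*(p)=R_e^*(p)+\frac{1}{\ln2}W_0\!\big(2^{-R_e^*(p)}/K_4(p)\big)$ and $R_s^*(p)=\frac{1}{\ln2}W_0\!\big(2^{-R_e^*(p)}/K_4(p)\big)$, where $K_4(p)=\frac{N[(L/N)^\alpha+1]}{p}$ and $R_e^*(p)=\log_2\!\left[\frac{2p}{\alpha}W_0\!\left(\frac{\alpha}{2}\left[\frac{\ln\frac{1}{1-\epsilon}}{NK_1}\right]^{-\alpha/2}\right)+1\right]$, and the corresponding optimal throughput $\mathbb{U}^*(p)=\frac{R_s^*(p)}{N}\exp\!\left[-K_4(p)\left(2^{R_t^*(p)}-1\right)\right]$. Then as $p\to\infty$: $R_t^*(p)\to\infty$, $$R_s^*(p)\to\frac{1}{\ln 2}W_0\!\left(\frac{1}{K_5}\right),\qquad \mathbb{U}^*(p)\to\frac{1}{N\ln2}W_0\!\left(\frac{1}{K_5}\right)\exp\!\left[-K_5\exp\!\left(W_0\!\left(\frac{1}{K_5}\right)\right)\right].$$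
   Context: These are the optimal wiretap-code rates and resulting secure transmission throughput $\mathbb{U}=\mathcal{P}_cR_s/N$ (with end-to-end connection probability $\mathcal{P}_c=\exp[-N(2^{R_t}-1)((L/N)^\alpha+1)/p]$) of the non-on-off transmission scheme in an $N$-hop linear network of length $L$ with equal hops, subject to end-to-end secrecy outage probability $\epsilon$ against Poisson eavesdroppers of density $\lambda_e$; $p$ is the transmitter-side SNR, $\alpha$ the path-loss exponent. $W_0$ is the principal branch of the Lambert W function. *)

(* Defs.v *)
From Stdlib Require Import Reals Lra ClassicalEpsilon.
Open Scope R_scope.

Definition W0 (x : R) : R :=
  epsilon (inhabits 0) (fun w => -1 <= w /\ w * exp w = x).

(* Gamma function via Euler's integral, as an improper Riemann integral
   Gamma s = lim_{T -> +oo} int_0^T t^(s-1) e^(-t) dt  (used for s > 1). *)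
Definition Gamma_integrand (s t : R) : R := Rpower t (s - 1) * exp (- t).

Definition Gamma_fun (s : R) : R :=
  epsilon (inhabits 0) (fun g =>
    forall eps, 0 < eps -> exists T0, forall T, T0 <= T ->
      exists pr : Riemann_integrable (Gamma_integrand s) 0 T,
        Rabs (RiemannInt pr - g) < eps).

Definition log2 (x : R) : R := ln x / ln 2.

Definition K1 (alpha lam_e : R) : R := PI * lam_e * Gamma_fun (2 / alpha + 1).

Definition Wterm (N : nat) (alpha lam_e eps : R) : R :=
  W0 (alpha / 2 * Rpower (ln (1 / (1 - eps)) / (INR N * K1 alpha lam_e)) (- alpha / 2)).

Definition K4 (N : nat) (L alpha p : R) : R :=
  INR N * (Rpower (L / INR N) alpha + 1) / p.

Definition K5 (N : nat) (L alpha lam_e eps : R) : R :=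
  2 * INR N / alpha * (Rpower (L / INR N) alpha + 1) * Wterm N alpha lam_e eps.

Definition Re_opt (N : nat) (alpha lam_e eps p : R) : R :=
  log2 (2 * p / alpha * Wterm N alpha lam_e eps + 1).

Definition Rs_opt (N : nat) (L alpha lam_e eps p : R) : R :=
  / ln 2 * W0 (Rpower 2 (- Re_opt N alpha lam_e eps p) / K4 N L alpha p).

Definition Rt_opt (N : nat) (L alpha lam_e eps p : R) : R :=
  Re_opt N alpha lam_e eps p + Rs_opt N L alpha lam_e eps p.

Definition U_opt (N : nat) (L alpha lam_e eps p : R) : R :=
  Rs_opt N L alpha lam_e eps p / INR N *
  exp (- K4 N L alpha p * (Rpower 2 (Rt_opt N L alpha lam_e eps p) - 1)).

(* Main.v *)
Require Import Defs.
From Stdlib Require Import Reals Lra ClassicalEpsilon.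
From Coquelicot Require Import Coquelicot.
Open Scope R_scope.

Lemma W0_spec y : 0 < y -> 0 < W0 y /\ W0 y * exp (W0 y) = y.
Proof.
  intros Hy. unfold W0.
  destruct (epsilon_spec (inhabits 0) (fun w => -1 <= w /\ w * exp w = y)) as [H1 H2].
  - destruct (IVT_cor (fun w => w * exp w - y) 0 y) as [z [Hz1 Hz2]].
    + reg.
    + lra.
    + pose proof (exp_ineq1 y ltac:(lra)). rewrite exp_0. nra.
    + exists z. split; lra.
  - split; [|exact H2].
    set (w := epsilon _ _) in *.
    destruct (Rle_or_lt w 0) as [Hw|Hw]; [|exact Hw].
    pose proof (exp_pos w). nra.
Qed.

Lemma f_mono a b : 0 <= a -> a < b -> a * exp a < b * exp b.
Proof.
  intros. pose proof (exp_increasing a b H0). pose proof (exp_pos a). nra.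
Qed.

Lemma f_wmono a b : 0 <= a -> a <= b -> a * exp a <= b * exp b.
Proof.
  intros Ha H. destruct (Rle_lt_or_eq_dec _ _ H) as [h|h].
  - left; apply f_mono; auto.
  - subst; lra.
Qed.

Lemma W0_between y a b : 0 < y -> 0 <= a -> a < b -> a * exp a < y -> y < b * exp b ->
  a < W0 y < b.
Proof.
  intros Hy Ha Hab H1 H2. destruct (W0_spec y Hy) as [Hw Hwe]. split.
  - destruct (Rle_or_lt (W0 y) a) as [h|h]; [|exact h].
    pose proof (f_wmono _ _ (Rlt_le _ _ Hw) h). lra.
  - destruct (Rle_or_lt b (W0 y)) as [h|h]; [|exact h].
    pose proof (f_wmono _ _ (Rlt_le 0 b ltac:(lra)) h). lra.
Qed.

Lemma W0_cont y : 0 < y -> continuity_pt W0 y.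
Proof.
  intros Hy eps Heps. destruct (W0_spec y Hy) as [Hw Hwe].
  set (w := W0 y) in *.
  set (e' := Rmin (eps/2) (w/2)).
  assert (He' : 0 < e') by (unfold e'; apply Rmin_pos; lra).
  assert (He1 : e' <= eps/2) by apply Rmin_l.
  assert (He2 : e' <= w/2) by apply Rmin_r.
  pose proof (f_mono (w - e') w ltac:(lra) ltac:(lra)) as Fa.
  pose proof (f_mono w (w + e') ltac:(lra) ltac:(lra)) as Fb.
  exists (Rmin (y - (w-e')*exp (w-e')) ((w+e')*exp(w+e') - y)).
  split. { apply Rmin_pos; lra. }
  intros x [_ Hx]. simpl in *. unfold R_dist in *.
  pose proof (Rmin_l (y - (w-e')*exp (w-e')) ((w+e')*exp(w+e') - y)).
  pose proof (Rmin_r (y - (w-e')*exp (w-e')) ((w+e')*exp(w+e') - y)).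
  apply Rabs_def2 in Hx. destruct Hx.
  assert (0 <= (w - e') * exp (w - e')).
  { apply Rmult_le_pos; [lra| left; apply exp_pos]. }
  destruct (W0_between x (w-e') (w+e')) as [A B]; try lra.
  apply Rabs_def1; lra.
Qed.

Lemma lim_eps f l : is_lim f p_infty (Finite l) ->
  forall e, 0 < e -> exists P, forall p, P < p -> Rabs (f p - l) < e.
Proof.
  intros H e He. apply is_lim_spec in H. destruct (H (mkposreal e He)) as [P HP].
  exists P. exact HP.
Qed.

Lemma lim_plus f g (a b : R) : is_lim f p_infty a -> is_lim g p_infty b ->
  is_lim (fun x => f x + g x) p_infty (a + b).
Proof. intros; eapply is_lim_plus; eauto. reflexivity. Qed.

Lemma lim_mult f g (a b : R) : is_lim f p_infty a -> is_lim g p_infty b ->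
  is_lim (fun x => f x * g x) p_infty (a * b).
Proof. intros. apply (is_lim_mult f g p_infty a b); auto. exact I. Qed.

Lemma lim_const (a : R) : is_lim (fun _ => a) p_infty a.
Proof. apply is_lim_const. Qed.

Lemma lim_invp : is_lim (fun p => / p) p_infty 0.
Proof.
  apply (is_lim_inv (fun y => y) p_infty p_infty); [apply is_lim_id| discriminate].
Qed.

Lemma lim_cont f g (l : R) : is_lim f p_infty l -> continuity_pt g l ->
  is_lim (fun x => g (f x)) p_infty (g l).
Proof.
  intros H1 H2. apply is_lim_comp_continuous; auto.
  apply continuity_pt_filterlim; auto.
Qed.

Lemma lim_inv f (l : R) : is_lim f p_infty l -> l <> 0 ->
  is_lim (fun x => / f x) p_infty (/ l).
Proof.
  intros H1 H2. apply (is_lim_inv f p_infty l); auto.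
  intro h; injection h; auto.
Qed.

Lemma ln2_pos : 0 < ln 2.
Proof. rewrite <- ln_1. apply ln_increasing; lra. Qed.

Theorem corollary4 (N : nat) (L alpha lam_e eps : R)
  (HN : (1 <= N)%nat) (HL : 0 < L) (Ha : 0 < alpha) (Hl : 0 < lam_e)
  (He0 : 0 < eps) (He1 : eps < 1) :
  (forall M : R, exists P : R, forall p, P < p -> M < Rt_opt N L alpha lam_e eps p)
  /\
  (forall e : R, 0 < e -> exists P : R, forall p, P < p ->
     Rabs (Rs_opt N L alpha lam_e eps p
           - / ln 2 * W0 (/ K5 N L alpha lam_e eps)) < e)
  /\
  (forall e : R, 0 < e -> exists P : R, forall p, P < p ->
     Rabs (U_opt N L alpha lam_e eps p
           - / (INR N * ln 2) * W0 (/ K5 N L alpha lam_e eps)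
             * exp (- K5 N L alpha lam_e eps * exp (W0 (/ K5 N L alpha lam_e eps)))) < e).
Proof.
  assert (HNr : 1 <= INR N) by (apply (le_INR 1 N) in HN; simpl in HN; lra).
  assert (HRp : 0 < Rpower (L / INR N) alpha) by (unfold Rpower; apply exp_pos).
  assert (HW : 0 < Wterm N alpha lam_e eps).
  { unfold Wterm. apply W0_spec. apply Rmult_lt_0_compat; [lra| unfold Rpower; apply exp_pos]. }
  pose proof ln2_pos as Hln2.
  assert (HK5 : K5 N L alpha lam_e eps = INR N * (Rpower (L / INR N) alpha + 1) * (2 * Wterm N alpha lam_e eps / alpha)).
  { unfold K5. field. lra. }
  assert (HK4 : forall p, K4 N L alpha p = INR N * (Rpower (L / INR N) alpha + 1) / p).
  { reflexivity. }
  unfold U_opt, Rt_opt, Rs_opt, Re_opt. setoid_rewrite HK5. unfold K4.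
  generalize (Wterm N alpha lam_e eps) HW; intros W HW'; clear HW.
  generalize (Rpower (L / INR N) alpha) HRp; intros Q HQ; clear HRp.

  set (c := INR N * (Q + 1)).
  assert (Hc : 0 < c) by (unfold c; nra).
  set (g := fun p => / (c * (2 * W / alpha + / p))).
  assert (Hg : is_lim g p_infty (/ (c * (2 * W / alpha)))).
  { unfold g. apply lim_inv.
    2:{ intro h. apply (Rmult_integral_contrapositive c (2*W/alpha)); [split|]; auto.
        - lra.
        - apply Rgt_not_eq. apply Rdiv_lt_0_compat; lra. }
    apply lim_mult; [apply lim_const|].
    pose proof (lim_plus _ _ _ _ (lim_const (2*W/alpha)) lim_invp) as H.
    rewrite Rplus_0_r in H. exact H. }
  assert (Hy : 0 < / (c * (2 * W / alpha))).
  { apply Rinv_0_lt_compat. apply Rmult_lt_0_compat; auto. apply Rdiv_lt_0_compat; lra. }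
  assert (HWg : is_lim (fun p => W0 (g p)) p_infty (W0 (/ (c * (2 * W / alpha))))).
  { apply lim_cont; auto. apply W0_cont; auto. }
  assert (Eqa : forall p, 0 < p ->
    Rpower 2 (- log2 (2 * p / alpha * W + 1)) / (c / p) = g p).
  { intros p Hp. unfold Rpower, log2, g.
    assert (Hz : 0 < 2 * p / alpha * W + 1).
    { assert (0 < 2 * p / alpha * W) by (apply Rmult_lt_0_compat; [apply Rdiv_lt_0_compat|]; lra). lra. }
    replace (- (ln (2 * p / alpha * W + 1) / ln 2) * ln 2) with (- ln (2 * p / alpha * W + 1))
      by (field; lra).
    rewrite exp_Ropp, exp_ln by auto. field. repeat split; try lra.
    assert (0 < 2 * p / alpha * W) by (apply Rmult_lt_0_compat; [apply Rdiv_lt_0_compat|]; lra).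
    intro h. assert (c * (2 * W + alpha) = 0) by nra.
    apply Rmult_integral in H0. lra. }
  repeat split.
  -
    intros M. exists (Rmax 1 (exp (M * ln 2) * alpha / (2 * W))).
    intros p Hp.
    assert (Hp1 : 1 < p) by (eapply Rle_lt_trans; [apply Rmax_l| exact Hp]).
    assert (Hp2 : exp (M * ln 2) * alpha / (2 * W) < p)
      by (eapply Rle_lt_trans; [apply Rmax_r| exact Hp]).
    rewrite Eqa by lra.
    assert (Hpos : 0 < / ln 2 * W0 (g p)).
    { apply Rmult_lt_0_compat; [apply Rinv_0_lt_compat; lra|].
      apply W0_spec. unfold g. apply Rinv_0_lt_compat. apply Rmult_lt_0_compat; auto.
      assert (0 < 2 * W / alpha) by (apply Rdiv_lt_0_compat; lra).
      assert (0 < / p) by (apply Rinv_0_lt_compat; lra). lra. }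
    enough (M < log2 (2 * p / alpha * W + 1)) by lra.
    unfold log2. apply (Rmult_lt_reg_r (ln 2)); auto.
    replace (ln (2 * p / alpha * W + 1) / ln 2 * ln 2) with (ln (2 * p / alpha * W + 1)) by (field; lra).
    rewrite <- (ln_exp (M * ln 2)). apply ln_increasing; [apply exp_pos|].
    assert (exp (M * ln 2) * alpha < p * (2 * W)).
    { apply (Rmult_lt_compat_r (2 * W)) in Hp2; [|lra].
      replace (exp (M * ln 2) * alpha / (2 * W) * (2 * W)) with (exp (M * ln 2) * alpha) in Hp2 by (field; lra).
      exact Hp2. }
    assert (exp (M * ln 2) < 2 * p / alpha * W).
    { apply (Rmult_lt_reg_r alpha); auto.
      replace (2 * p / alpha * W * alpha) with (p * (2 * W)) by (field; lra). lra. }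
    lra.
  -
    intros e He.
    apply (lim_eps (fun p => / ln 2 * W0 (Rpower 2 (- log2 (2 * p / alpha * W + 1)) / (c / p))));
      auto.
    apply (is_lim_ext_loc (fun p => / ln 2 * W0 (g p))).
    { exists 0. intros p Hp. rewrite Eqa; auto. }
    apply (lim_mult (fun _ => / ln 2)); [apply lim_const| exact HWg].
  -
    intros e He.
    apply (lim_eps (fun p => / ln 2 * W0 (Rpower 2 (- log2 (2 * p / alpha * W + 1)) / (c / p)) / INR N *
      exp (- (c / p) * (Rpower 2 (log2 (2 * p / alpha * W + 1) +
        / ln 2 * W0 (Rpower 2 (- log2 (2 * p / alpha * W + 1)) / (c / p))) - 1))));
      auto.
    apply (is_lim_ext_loc (fun p => / ln 2 * W0 (g p) / INR N *
       exp (- (c * ((2 * W / alpha + / p) * exp (W0 (g p)) - / p))))).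
    { exists 0. intros p Hp. rewrite Eqa; auto. f_equal. f_equal.
      unfold Rpower at 1, log2.
      assert (Hz : 0 < 2 * p / alpha * W + 1).
      { assert (0 < 2 * p / alpha * W) by (apply Rmult_lt_0_compat; [apply Rdiv_lt_0_compat|]; lra). lra. }
      replace ((ln (2 * p / alpha * W + 1) / ln 2 + / ln 2 * W0 (g p)) * ln 2)
        with (ln (2 * p / alpha * W + 1) + W0 (g p)) by (field; lra).
      rewrite exp_plus, exp_ln by auto. field. lra. }
    replace (/ (INR N * ln 2) * W0 (/ (c * (2 * W / alpha))) *
      exp (- (c * (2 * W / alpha)) * exp (W0 (/ (c * (2 * W / alpha))))))
    with (/ ln 2 * W0 (/ (c * (2 * W / alpha))) * / INR N *
      exp (- (c * ((2 * W / alpha + 0) * exp (W0 (/ (c * (2 * W / alpha)))) - 0))))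
      by (rewrite Rplus_0_r, Rminus_0_r;
          replace (- (c * (2 * W / alpha * exp (W0 (/ (c * (2 * W / alpha)))))))
            with (- (c * (2 * W / alpha)) * exp (W0 (/ (c * (2 * W / alpha))))) by ring;
          field; lra).
    apply lim_mult.
    + apply lim_mult; [apply (lim_mult (fun _ => / ln 2)); [apply lim_const| exact HWg]|].
      apply lim_const.
    + apply (lim_cont (fun p => - (c * ((2 * W / alpha + / p) * exp (W0 (g p)) - / p))) exp).
      2:{ apply derivable_continuous_pt, derivable_pt_exp. }
      apply (is_lim_opp _ p_infty (Finite _)).
      apply (lim_mult (fun _ => c)); [apply lim_const|].
      unfold Rminus. apply lim_plus.
      * apply lim_mult; [apply lim_plus; [apply lim_const| apply lim_invp]|].
        apply (lim_cont (fun p => W0 (g p)) exp); [exact HWg|].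
        apply derivable_continuous_pt, derivable_pt_exp.
      * apply (is_lim_opp _ p_infty (Finite 0)). apply lim_invp.
Qed.
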